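(* Consider the network with vertices $s_1,s_2,s_3,t$ and directed edges $(s_3,s_1),(s_3,s_2),(s_1,t),(s_2,t)$, messages $X_1^k,X_2^k,X_3^k$ with all $3k$ components i.i.d. uniform on a finite alphabet $\mathcal{A}$ ($|\mathcal{A}|>1$), and a demand function $f:\mathcal{A}^3\to\mathcal{B}$ applied componentwise. Let $\mathcal{C}_{f,k}$ be a source-network code that computes $f(X_1^k,X_2^k,X_3^k)$ at $t$ with zero error, and let $\mathbf{a}_3\in\mathcal{A}^k$ be a realization of $X_3^k$. Then for $u\in\{1,2\}$, the number of distinct $\mathbf{Z}_u$-labels that must be transmitted on the edge $(s_u,t)$ (i.e. the number of distinct values of $\mathbf{Z}_u$ over all $X_u^k\in\mathcal{A}^k$ with $X_3^k=\mathbf{a}_3$) is at least $V_u(\mathbf{a}_3)\triangleq\prod_{i=1}^k V_u(a_3^{(i)})$. Moreover, if $\mathbf{x}_1\not\equiv^{\mathbf{a}_3}\mathbf{y}_1|_1$, then $\phi_{(s_1,t)}(\mathbf{x}_1,\phi_{(s_3,s_1)}(\mathbf{a}_3))\neq\phi_{(s_1,t)}(\mathbf{y}_1,\phi_{(s_3,s_1)}(\mathbf{a}_3))$, and analogously, if $\mathbf{x}_2\not\equiv^{\mathbf{a}_3}\mathbf{y}_2|_2$, then $\phi_{(s_2,t)}(\mathbf{x}_2,\phi_{(s_3,s_2)}(\mathbf{a}_3))\neq\phi_{(s_2,t)}(\mathbf{y}_2,\phi_{(s_3,s_2)}(\mathbf{a}_3))$.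
   Context: A source-network code $\mathcal{C}_{f,k}$ consists of encoders $\phi_{(s_3,s_1)},\phi_{(s_3,s_2)}:\mathcal{A}^k\to\mathcal{Z}^*$, $\phi_{(s_1,t)},\phi_{(s_2,t)}:\mathcal{A}^k\times\mathcal{Z}^*\to\mathcal{Z}^*$ (where $\mathcal{Z}^*$ is the set of finite sequences over a finite alphabet $\mathcal{Z}$, $|\mathcal{Z}|>1$) and a decoder $\psi_t:\mathcal{Z}^*\times\mathcal{Z}^*\to\mathcal{B}^k$, with $\mathbf{Z}_1=\phi_{(s_1,t)}(X_1^k,\phi_{(s_3,s_1)}(X_3^k))$, $\mathbf{Z}_2=\phi_{(s_2,t)}(X_2^k,\phi_{(s_3,s_2)}(X_3^k))$ and zero error meaning $\Pr\{\psi_t(\mathbf{Z}_1,\mathbf{Z}_2)\ne f(X_1^k,X_2^k,X_3^k)\}=0$. For $a_3\in\mathcal{A}$ and $x,y\in\mathcal{A}$: $x\equiv^{a_3}y|_1$ iff $f(x,z,a_3)=f(y,z,a_3)$ for all $z\in\mathcal{A}$; $x\equiv^{a_3}y|_2$ iff $f(z,x,a_3)=f(z,y,a_3)$ for all $z\in\mathcal{A}$. These are equivalence relations on $\mathcal{A}$, and $V_u(a_3)$ denotes the number of equivalence classes of $\equiv^{a_3}|_u$. For vectors $\mathbf{x}_u,\mathbf{y}_u,\mathbf{a}_3\in\mathcal{A}^k$: $\mathbf{x}_u\equiv^{\mathbf{a}_3}\mathbf{y}_u|_u$ iff $x_u^{(j)}\equiv^{a_3^{(j)}}y_u^{(j)}|_u$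 for all $j=1,\ldots,k$. *)

(* Defs.v *)
From mathcomp Require Import all_boot all_order all_algebra.
Set Implicit Arguments. Unset Strict Implicit. Unset Printing Implicit Defensive.

Section Defs.
Variables (A B Z : finType) (k : nat) (f : A -> A -> A -> B).

Definition equiv1 (a3 x y : A) : bool := [forall z, f x z a3 == f y z a3].
Definition equiv2 (a3 x y : A) : bool := [forall z, f z x a3 == f z y a3].

Definition nclasses (r : A -> A -> bool) : nat :=
  #|[set [set y | r x y] | x : A]|.

Definition V1 (a3 : A) : nat := nclasses (equiv1 a3).
Definition V2 (a3 : A) : nat := nclasses (equiv2 a3).

Definition vequiv1 (a3 x y : k.-tuple A) : bool :=
  [forall i, equiv1 (tnth a3 i) (tnth x i) (tnth y i)].
Definition vequiv2 (a3 x y : k.-tuple A) : bool :=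
  [forall i, equiv2 (tnth a3 i) (tnth x i) (tnth y i)].

Definition fvec (x1 x2 x3 : k.-tuple A) : k.-tuple B :=
  [tuple f (tnth x1 i) (tnth x2 i) (tnth x3 i) | i < k].

(* A source-network code C_{f,k}; Z* = seq Z *)
Record code := Code {
  phi31 : k.-tuple A -> seq Z;
  phi32 : k.-tuple A -> seq Z;
  phi1t : k.-tuple A -> seq Z -> seq Z;
  phi2t : k.-tuple A -> seq Z -> seq Z;
  psit  : seq Z -> seq Z -> k.-tuple B }.

Definition Z1 (C : code) (x1 x3 : k.-tuple A) : seq Z := phi1t C x1 (phi31 C x3).
Definition Z2 (C : code) (x2 x3 : k.-tuple A) : seq Z := phi2t C x2 (phi32 C x3).

(* Probability of error when all 3k components are i.i.d. uniform on A:
   (number of error triples) / |A|^(3k) *)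
Definition error_prob (C : code) : rat :=
  (#|[set x : (k.-tuple A * k.-tuple A * k.-tuple A) |
       psit C (Z1 C x.1.1 x.2) (Z2 C x.1.2 x.2) != fvec x.1.1 x.1.2 x.2]|%:R
   / (#|A| ^ (3 * k))%:R)%R.

Definition zero_error (C : code) : Prop := error_prob C = 0%R.

Definition nlabels1 (C : code) (a3 : k.-tuple A) : nat :=
  size (undup [seq Z1 C x a3 | x <- enum {: k.-tuple A}]).
Definition nlabels2 (C : code) (a3 : k.-tuple A) : nat :=
  size (undup [seq Z2 C x a3 | x <- enum {: k.-tuple A}]).

End Defs.

(* Main.v *)
Require Import Defs.
From mathcomp Require Import all_boot all_order all_algebra.
Import GRing.Theory Num.Theory.

Lemma count_gen (A Z : finType) (k : nat) (e : A -> A -> A -> bool)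
  (a3 : k.-tuple A) (L : k.-tuple A -> seq Z)
  (refl : forall a x, e a x x) (sym : forall a x y, e a x y -> e a y x)
  (tr : forall a x y z, e a x y -> e a y z -> e a x z)
  (HL : forall x y, L x = L y -> forall i, e (tnth a3 i) (tnth x i) (tnth y i)) :
  \prod_(i < k) nclasses (e (tnth a3 i)) <=
    size (undup [seq L x | x <- enum {: k.-tuple A}]).
Proof.
pose S i := [set [set y | e (tnth a3 i) x y] | x : A].
pose F := fun i : 'I_k => (fun s : {set A} => s \in S i).
have -> : \prod_(i < k) nclasses (e (tnth a3 i)) = #|family F|.
  rewrite card_family foldrE big_map big_enum /=.
  by apply: eq_bigr.
pose g := fun h : {ffun 'I_k -> {set A}} =>
  [tuple odflt (tnth a3 i) [pick y in h i] | i < k].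
have key : forall (h : {ffun 'I_k -> {set A}}) i x, h i = [set y | e (tnth a3 i) x y] ->
   e (tnth a3 i) x (tnth (g h) i).
  move=> h i x hx; rewrite tnth_mktuple.
  case: pickP => [y|none] /=.
    by rewrite hx inE.
  by have := none x; rewrite hx inE refl.
rewrite -(size_image (L \o g)).
apply: uniq_leq_size.
  rewrite map_inj_in_uniq ?enum_uniq // => h1 h2.
  rewrite !mem_enum => /familyP H1 /familyP H2 /= HLg.
  apply/ffunP => i.
  have := H1 i; rewrite /F /S => /imsetP [x1 _ E1].
  have := H2 i; rewrite /F /S => /imsetP [x2 _ E2].
  have K1 := key _ _ _ E1; have K2 := key _ _ _ E2.
  have Hg := HL _ _ HLg i.
  have x12 : e (tnth a3 i) x1 x2.
    apply: (tr _ _ _ _ K1); apply: (tr _ _ _ _ Hg); exact: (sym _ _ _ K2).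
  rewrite E1 E2; apply/setP => w; rewrite !inE.
  apply/idP/idP => Hw.
    exact: (tr _ _ _ _ (sym _ _ _ x12) Hw).
  exact: (tr _ _ _ _ x12 Hw).
move=> s /mapP [h _ ->]; rewrite mem_undup.
by apply: map_f; rewrite mem_enum.
Qed.

Theorem lemma4 (A B Z : finType) (k : nat) (f : A -> A -> A -> B)
  (hA : 1 < #|A|) (hZ : 1 < #|Z|) (C : code A B Z k)
  (hC : zero_error f C) (a3 : k.-tuple A) :
  [/\ \prod_(i < k) V1 f (tnth a3 i) <= nlabels1 C a3,
      \prod_(i < k) V2 f (tnth a3 i) <= nlabels2 C a3,
      (forall x1 y1 : k.-tuple A, ~~ vequiv1 f a3 x1 y1 ->
         phi1t C x1 (phi31 C a3) != phi1t C y1 (phi31 C a3)) &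
      (forall x2 y2 : k.-tuple A, ~~ vequiv2 f a3 x2 y2 ->
         phi2t C x2 (phi32 C a3) != phi2t C y2 (phi32 C a3))].
Proof.
have corr : forall x1 x2 x3, psit C (Z1 C x1 x3) (Z2 C x2 x3) = fvec f x1 x2 x3.
  move=> x1 x2 x3.
  move: hC; rewrite /zero_error /error_prob => /eqP.
  rewrite mulf_eq0 invr_eq0 !pnatr_eq0 expn_eq0.
  have -> : (#|A| == 0) = false by apply/negbTE; rewrite -lt0n (ltn_trans _ hA).
  rewrite andFb orbF cards_eq0 => /eqP E.
  apply/eqP; apply/negPn/negP => ne.
  have : ((x1, x2), x3) \in set0 by rewrite -E inE.
  by rewrite inE.
have e1 : forall x y, Z1 C x a3 = Z1 C y a3 -> forall i, equiv1 f (tnth a3 i) (tnth x i) (tnth y i).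
  move=> x y Exy i; apply/forallP => z.
  have := corr x [tuple z | _ < k] a3; rewrite Exy corr => /(congr1 (fun t => tnth t i)).
  by rewrite !tnth_mktuple => ->.
have e2 : forall x y, Z2 C x a3 = Z2 C y a3 -> forall i, equiv2 f (tnth a3 i) (tnth x i) (tnth y i).
  move=> x y Exy i; apply/forallP => z.
  have := corr [tuple z | _ < k] x a3; rewrite Exy corr => /(congr1 (fun t => tnth t i)).
  by rewrite !tnth_mktuple => ->.
split.
- apply: count_gen => //.
  + by move=> a x; apply/forallP.
  + by move=> a x y /forallP H; apply/forallP => z; rewrite eq_sym; apply: H.
  + by move=> a x y w /forallP H1 /forallP H2; apply/forallP => z; rewrite (eqP (H1 z)).
- apply: count_gen => //.
  + by move=> a x; apply/forallP.
  + by move=> a x y /forallP H; apply/forallP => z; rewrite eq_sym; apply: H.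
  + by move=> a x y w /forallP H1 /forallP H2; apply/forallP => z; rewrite (eqP (H1 z)).
- move=> x y /forallP H; apply/eqP => E; apply: H => i; exact: e1 E i.
- move=> x y /forallP H; apply/eqP => E; apply: H => i; exact: e2 E i.
Qed.
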